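(* Let $c\in\mathbb{C}\setminus\{0\}$ and let $\mathbf{U}_0(\lambda;x,t)$, $\mu^{[22]}$, $\nu^{[22]}$ be as defined below. Let $\psi_1:\mathbb{R}\to\mathbb{C}$ be such that the integrals defining $$C_\mu(\lambda)=\frac1\pi\Im\Big\{\int_{\mathbb{R}}\psi_1(y)\nu^{[22]}(\lambda;y,0)^*dy\Big\},\qquad C_\nu(\lambda)=-\frac1\pi\Im\Big\{\int_{\mathbb{R}}\psi_1(y)\mu^{[22]}(\lambda;y,0)^*dy\Big\}$$ exist for a.e. $\lambda\in\mathbb{R}$ and $C_\mu,C_\nu\in L^1(\mathbb{R})$. Then $$\psi_1^{\mathbb{R}}(x,t):=\int_{\mathbb{R}}\big(C_\mu(\lambda)\mu^{[22]}(\lambda;x,t)+C_\nu(\lambda)\nu^{[22]}(\lambda;x,t)\big)d\lambda$$ is uniformly bounded for $(x,t)\in\mathbb{R}^2$.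
   Context: $\sigma_2=\begin{bmatrix}0&-\mathrm{i}\\\mathrm{i}&0\end{bmatrix}$, $\sigma_3=\mathrm{diag}(1,-1)$. $\rho(\lambda)$: branch of $\sqrt{\lambda^2+1}$ analytic off $[-\mathrm{i},\mathrm{i}]$ with $\rho\sim\lambda$ (real for real $\lambda\neq0$); $n(\lambda)$ analytic off $[-\mathrm{i},\mathrm{i}]$ with $n^2=(\lambda+\rho)/(2\rho)$, $n\to1$; $\mathbf{E}(\lambda)=n\begin{bmatrix}1&\mathrm{i}(\lambda-\rho)\\\mathrm{i}(\lambda-\rho)&1\end{bmatrix}$. Peregrine data: $\mathbf{s}=(c,-c)^\top$, $N=2|c|^2$, $w(x,t)=-2c^2(x+\mathrm{i}t)$, $\mathbf{Y}(x,t)=\big[4(1-w^* )\mathbf{s}\mathbf{s}^\top\sigma_2+2\mathrm{i}N\sigma_2\mathbf{s}^*\mathbf{s}^\top\sigma_2\big]/(4|1-w|^2+N^2)$, $\mathbf{G}(\lambda;x,t)=\mathbb{I}+\mathbf{Y}/(\lambda-\mathrm{i})+\sigma_2\mathbf{Y}^*\sigma_2/(\lambda+\mathrm{i})$. Then $\psi_0=1+2\mathrm{i}(Y_{12}-Y_{21}^* )$ is the Peregrine breather $1-4\frac{1+2\mathrm{i}(t-t_0)}{1+4(x-x_0)^2+4(t-t_0)^2}$ with $x_0=-\Re c^2/(2|c|^4)$, $t_0=\Im c^2/(2|c|^4)$, and $\mathbf{U}_0(\lambda;x,t):=\mathbf{G}(\lambda;x,t)\mathbf{E}(\lambda)e^{-\mathrm{i}\rho(\lambda)(x+\lambda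 t)\sigma_3}$, $\lambda\in\mathbb{R}\setminus\{0\}$, is a simultaneous fundamental solution of its Lax pair. Let $\mathbf{u}^{[2]}=(u^{[2]}_1,u^{[2]}_2)^\top$ be the second column of $\mathbf{U}_0$, and $\mu^{[22]}(\lambda;x,t)=(u^{[2]}_1)^2-((u^{[2]}_2)^* )^2$, $\nu^{[22]}(\lambda;x,t)=\mathrm{i}(u^{[2]}_1)^2+\mathrm{i}((u^{[2]}_2)^* )^2$; these solve the linearized NLS equation $\mathrm{i}\psi_{1t}+\frac12\psi_{1xx}+(2|\psi_0|^2-1)\psi_1+\psi_0^2\psi_1^*=0$ about $\psi_0$. *)

(* Defs.v *)
From HB Require Import structures.
From mathcomp Require Import all_boot all_order all_algebra.
From mathcomp Require Import all_classical all_reals all_analysis.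
From mathcomp Require Import complex.
Set Implicit Arguments. Unset Strict Implicit. Unset Printing Implicit Defensive.
Import Order.TTheory GRing.Theory Num.Theory.
Local Open Scope ring_scope.

Section Peregrine.
Variable R : realType.
Local Notation C := R[i].

Definition rC (x : R) : C := Complex x 0.
Definition iC : C := Complex 0 1.
Definition expi (th : R) : C := Complex (cos th) (sin th).

(* rho(lambda) = sqrt(lambda^2+1) on the branch with rho ~ lambda:
   for real lambda <> 0 it equals sgn(lambda) * sqrt(lambda^2+1).
   (The value at lambda = 0, a null set, is immaterial.) *)
Definition rho (l : R) : R :=
  if l < 0 then - Num.sqrt (l ^+ 2 + 1) else Num.sqrt (l ^+ 2 + 1).

(* n(lambda): for real lambda <> 0, n^2 = (l+rho)/(2 rho) > 0 and n -> 1,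
   so n is the positive square root. *)
Definition nfac (l : R) : R := Num.sqrt ((l + rho l) / (2 * rho l)).

Definition i0 : 'I_2 := @Ordinal 2 0 isT.
Definition i1 : 'I_2 := @Ordinal 2 1 isT.

Definition mx22 (a b c d : C) : 'M[C]_2 :=
  \matrix_(i < 2, j < 2)
    if (nat_of_ord i == 0%N) then (if nat_of_ord j == 0%N then a else b)
    else (if nat_of_ord j == 0%N then c else d).

Definition sigma2 : 'M[C]_2 := mx22 0 (- iC) iC 0.

Definition mconj m n (A : 'M[C]_(m, n)) : 'M[C]_(m, n) := map_mx (@conjc R) A.

Definition svec (c : C) : 'cV[C]_2 :=
  \col_(i < 2) (if nat_of_ord i == 0%N then c else - c).
Definition Ncst (c : C) : C := 2 * (c * conjc c).
Definition wfun (c : C) (x t : R) : C := - 2 * c ^+ 2 * (rC x + iC * rC t).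

Definition Ymat (c : C) (x t : R) : 'M[C]_2 :=
  let s := svec c in
  let w := wfun c x t in
  let N := Ncst c in
  (4 * ((1 - w) * conjc (1 - w)) + N ^+ 2)^-1 *:
  ((4 * (1 - conjc w)) *: (s *m s^T *m sigma2)
   + (2 * iC * N) *: (sigma2 *m mconj s *m s^T *m sigma2)).

Definition Gmat (c : C) (l x t : R) : 'M[C]_2 :=
  1%:M + (rC l - iC)^-1 *: Ymat c x t
       + (rC l + iC)^-1 *: (sigma2 *m mconj (Ymat c x t) *m sigma2).

Definition Emat (l : R) : 'M[C]_2 :=
  rC (nfac l) *: mx22 1 (iC * rC (l - rho l)) (iC * rC (l - rho l)) 1.

Definition Expmat (l x t : R) : 'M[C]_2 :=
  mx22 (expi (- (rho l * (x + l * t)))) 0 0 (expi (rho l * (x + l * t))).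

Definition U0 (c : C) (l x t : R) : 'M[C]_2 := Gmat c l x t *m Emat l *m Expmat l x t.

(* second column u^{[2]} = (u1, u2) *)
Definition u1 (c : C) (l x t : R) : C := U0 c l x t i0 i1.
Definition u2 (c : C) (l x t : R) : C := U0 c l x t i1 i1.

Definition mu22 (c : C) (l x t : R) : C :=
  u1 c l x t ^+ 2 - (conjc (u2 c l x t)) ^+ 2.
Definition nu22 (c : C) (l x t : R) : C :=
  iC * u1 c l x t ^+ 2 + iC * (conjc (u2 c l x t)) ^+ 2.

Local Notation leb := (@lebesgue_measure R).

Definition Cintegrable (f : R -> C) : Prop :=
  leb.-integrable setT (fun y => (complex.Re (f y))%:E) /\
  leb.-integrable setT (fun y => (complex.Im (f y))%:E).

Definition Cint (f : R -> C) : C :=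
  Complex (Rintegral leb setT (fun y => complex.Re (f y)))
          (Rintegral leb setT (fun y => complex.Im (f y))).

Definition Cmu (psi1 : R -> C) (c : C) (l : R) : R :=
  complex.Im (Cint (fun y => psi1 y * conjc (nu22 c l y 0))) / pi.
Definition Cnu (psi1 : R -> C) (c : C) (l : R) : R :=
  - (complex.Im (Cint (fun y => psi1 y * conjc (mu22 c l y 0))) / pi).

Definition psi1R (psi1 : R -> C) (c : C) (x t : R) : C :=
  Cint (fun l => rC (Cmu psi1 c l) * mu22 c l x t + rC (Cnu psi1 c l) * nu22 c l x t).

End Peregrine.

(* Main.v *)
Require Import Defs.
From HB Require Import structures.
From mathcomp Require Import all_boot all_order all_algebra.
From mathcomp Require Import all_classical all_reals all_analysis.
From mathcomp Require Import complex.
Import Order.TTheory GRing.Theory Num.Theory.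
Local Open Scope ring_scope.

From mathcomp Require Import ring lra.
Local Open Scope ring_scope.
Local Open Scope classical_set_scope.

Section IntB.
Variable R : realType.
Local Notation leb := (@lebesgue_measure R).

Lemma int_mono (f1 f2 : R -> \bar R) : (forall x, (0 <= f1 x)%E) ->
  (forall x, (f1 x <= f2 x)%E) ->
  (\int[leb]_(x in setT) f1 x <= \int[leb]_(x in setT) f2 x)%E.
Proof.
move=> f10 f12.
have f20 : forall x, (0 <= f2 x)%E by move=> x; exact: le_trans (f10 x) (f12 x).
rewrite !ge0_integralTE //; apply: ereal_sup_le.
move=> _ [h hf <-]; exists h => //= x; exact: le_trans (hf x) (f12 x).
Qed.

Lemma Rint_bound (h g : R -> R) : (forall x, `|h x| <= g x) ->
  leb.-integrable setT (fun x => (g x)%:E) ->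
  `|Rintegral leb setT h| <= Rintegral leb setT g.
Proof.
move=> hg /integrableP [_ gfin].
have g0 : forall x, 0 <= g x by move=> x; exact: le_trans (normr_ge0 _) (hg x).
have Gfin : (\int[leb]_(x in setT) (g x)%:E < +oo)%E.
  apply: le_lt_trans gfin; apply: int_mono => x /=; by rewrite lee_fin ?ler_norm.
have G0 : (0 <= \int[leb]_(x in setT) (g x)%:E)%E by apply: integral_ge0 => x _; rewrite lee_fin.
have Hp : (\int[leb]_(x in setT) ((fun x => (h x)%:E)^\+ x) <= \int[leb]_(x in setT) (g x)%:E)%E.
  apply: int_mono => x; first exact: funepos_ge0.
  rewrite funeposE /= -EFin_max lee_fin ge_max g0 andbT.
  exact: le_trans (ler_norm _) (hg x).
have Hn : (\int[leb]_(x in setT) ((fun x => (h x)%:E)^\- x) <= \int[leb]_(x in setT) (g x)%:E)%E.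
  apply: int_mono => x; first exact: funeneg_ge0.
  rewrite funenegE /= -EFin_max lee_fin ge_max g0 andbT.
  have /andP[? ?] : - g x <= h x <= g x by rewrite -ler_norml.
  lra.
have Ap : (0 <= \int[leb]_(x in setT) ((fun x => (h x)%:E)^\+ x))%E.
  by apply: integral_ge0 => x _; exact: funepos_ge0.
have An : (0 <= \int[leb]_(x in setT) ((fun x => (h x)%:E)^\- x))%E.
  by apply: integral_ge0 => x _; exact: funeneg_ge0.
rewrite /Rintegral integralE.
move: Ap An Hp Hn Gfin G0.
set A := (\int[leb]_(x in setT) _ )%E.
set B := (\int[leb]_(x in setT) _ )%E.
set G := (\int[leb]_(x in setT) _ )%E.
move: A B G => [a| |] [b| |] [gg| |] //=; rewrite ?lee_fin ?leey ?leNye //= => a0 b0 ag bg _ g0'.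
rewrite ler_norml; apply/andP; split; lra.
Qed.
End IntB.

Set Implicit Arguments. Unset Strict Implicit.

Section Bnd.
Variable R : realType.
Local Notation C := R[i].
Local Notation nc := (@ComplexField.Normc.normc R).

Lemma nc_ge0 (z : C) : 0 <= nc z.
Proof. by case: z => a b; rewrite /= sqrtr_ge0. Qed.

Lemma ncD (x y : C) : nc (x + y) <= nc x + nc y.
Proof. exact: (@le_normcD R x y). Qed.

Lemma ncM (x y : C) : nc (x * y) = nc x * nc y.
Proof. exact: ComplexField.Normc.normcM. Qed.

Lemma ncV (x : C) : nc (x^-1) = (nc x)^-1.
Proof. exact: ComplexField.Normc.normcV. Qed.

Lemma ncN (x : C) : nc (- x) = nc x.
Proof. exact: (@normcN R x). Qed.

Lemma nc0 : nc 0 = 0.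
Proof. exact: ComplexField.Normc.normc0. Qed.

Lemma nc1 : nc 1 = 1.
Proof. exact: ComplexField.Normc.normc1. Qed.

Lemma nc_conj (z : C) : nc (conjc z) = nc z.
Proof. by case: z => a b; rewrite /= sqrrN. Qed.

Lemma nc_rC (x : R) : nc (rC x) = `|x|.
Proof. by rewrite /= expr0n addr0 sqrtr_sqr. Qed.

Lemma nc_iC : nc (iC R) = 1.
Proof. by rewrite /= expr0n expr1n add0r sqrtr1. Qed.

Lemma nc_expi (t : R) : nc (expi t) = 1.
Proof. by rewrite /= cos2Dsin2 sqrtr1. Qed.

Lemma Re_nc (z : C) : `|complex.Re z| <= nc z.
Proof.
case: z => a b /=.
have h : a ^+ 2 <= a ^+ 2 + b ^+ 2 by rewrite lerDl sqr_ge0.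
have := ler_wsqrtr h; by rewrite sqrtr_sqr.
Qed.

Lemma Im_nc (z : C) : `|complex.Im z| <= nc z.
Proof.
case: z => a b /=.
have h : b ^+ 2 <= a ^+ 2 + b ^+ 2 by rewrite lerDr sqr_ge0.
have := ler_wsqrtr h; by rewrite sqrtr_sqr.
Qed.

Lemma nc_le_sum (z : C) : nc z <= `|complex.Re z| + `|complex.Im z|.
Proof.
case: z => a b /=.
have s0 := sqrtr_ge0 (a ^+ 2 + b ^+ 2).
have s2 := sqr_sqrtr (addr_ge0 (sqr_ge0 a) (sqr_ge0 b)).
move: s0 s2; set s := Num.sqrt _ => s0 s2.
have ha : a ^+ 2 = `|a| ^+ 2 by rewrite real_normK ?num_real.
have hb : b ^+ 2 = `|b| ^+ 2 by rewrite real_normK ?num_real.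
have na := normr_ge0 a; have nb := normr_ge0 b.
move: s2; rewrite ha hb; move: (`|a|) (`|b|) na nb => x y hx hy hs.
nra.
Qed.

Definition mb m n (A : 'M[C]_(m, n)) (K : R) := forall i j, nc (A i j) <= K.
Arguments mb {m n}.


Lemma mb_add m n (A B : 'M[C]_(m, n)) Ka Kb : mb A Ka -> mb B Kb -> mb (A + B) (Ka + Kb).
Proof. by move=> hA hB i j; rewrite mxE; apply: le_trans (ncD _ _) _; exact: lerD. Qed.

Lemma mb_scale m n (A : 'M[C]_(m, n)) k Ka : mb A Ka -> mb (k *: A) (nc k * Ka).
Proof. by move=> hA i j; rewrite mxE ncM ler_wpM2l ?nc_ge0. Qed.

Lemma mb_mul m p n (A : 'M[C]_(m, p)) (B : 'M[C]_(p, n)) Ka Kb :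
  mb A Ka -> mb B Kb -> mb (A *m B) ((Ka * Kb) *+ p).
Proof.
move=> hA hB i j; rewrite mxE.
have -> : (Ka * Kb) *+ p = \sum_(k < p) (Ka * Kb) by rewrite sumr_const card_ord.
elim/big_rec2: _ => [|k y1 y2 _ h]; first by rewrite nc0.
apply: le_trans (ncD _ _) _; apply: lerD => //.
by rewrite ncM; apply: ler_pM; rewrite ?nc_ge0.
Qed.

Lemma mb_conj m n (A : 'M[C]_(m, n)) Ka : mb A Ka -> mb (mconj A) Ka.
Proof. by move=> hA i j; rewrite mxE nc_conj. Qed.

Lemma mb_tr m n (A : 'M[C]_(m, n)) Ka : mb A Ka -> mb A^T Ka.
Proof. by move=> hA i j; rewrite mxE. Qed.

Lemma mb_1 n : mb (1%:M : 'M[C]_n) 1.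
Proof. by move=> i j; rewrite mxE; case: (i == j); rewrite ?mulr1n ?mulr0n ?nc1 ?nc0. Qed.

Lemma mb_mono m n (A : 'M[C]_(m, n)) K K' : mb A K -> K <= K' -> mb A K'.
Proof. by move=> hA hK i j; exact: le_trans (hA i j) hK. Qed.

Lemma mb_mx22 a b c d K : nc a <= K -> nc b <= K -> nc c <= K -> nc d <= K ->
  mb (mx22 a b c d) K.
Proof.
move=> ha hb hc hd i j; rewrite mxE.
by case: (nat_of_ord i == 0%N); case: (nat_of_ord j == 0%N).
Qed.

End Bnd.

Section Sc.
Variable R : realType.
Local Notation C := R[i].
Local Notation nc := (@ComplexField.Normc.normc R).

Lemma rho_facts (l : R) : exists s, 0 < s /\ s ^+ 2 = l ^+ 2 + 1 /\
  rho l = (if l < 0 then - s else s).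
Proof.
exists (Num.sqrt (l ^+ 2 + 1)); split; last split => //.
  by rewrite sqrtr_gt0 ltr_pwDr ?sqr_ge0.
by rewrite sqr_sqrtr // addr_ge0 ?sqr_ge0.
Qed.

Lemma lrho_bound (l : R) : `|l - rho l| <= 1.
Proof.
have [s [s0 [s2 ->]]] := rho_facts l.
rewrite ler_norml; case: ifP => hl.
  have hl' : l < 0 by [].
  apply/andP; split; nra.
have hl' : 0 <= l by rewrite leNgt hl.
apply/andP; split; nra.
Qed.

Lemma nfac_bound (l : R) : 0 <= nfac l <= 1.
Proof.
rewrite /nfac sqrtr_ge0 /=.
suff hq : (l + rho l) / (2 * rho l) <= 1.
  by have := ler_wsqrtr hq; rewrite sqrtr1.
have [s [s0 [s2 ->]]] := rho_facts l.
case: ifP => hl.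
  have hl' : l < 0 by [].
  have d0 : 2 * - s != 0 by rewrite mulf_neq0 // oppr_eq0 gt_eqF.
  have du := mulfV d0.
  move: du; set u := (2 * - s)^-1 => du.
  have u0 : u < 0 by nra.
  have ls : 0 <= l + s by nra.
  nra.
have hl' : 0 <= l by rewrite leNgt hl.
have d0 : 2 * s != 0 by rewrite mulf_neq0 // gt_eqF.
have du := mulfV d0.
move: du; set u := (2 * s)^-1 => du.
have u0 : 0 < u by nra.
have ls : l <= s by nra.
nra.
Qed.

Lemma inv_lmi (l : R) : nc ((rC l - iC R)^-1) <= 1.
Proof.
have -> : rC l - iC R = Complex l (-1) by rewrite /rC /iC; simpc.
rewrite ncV /= invf_le1.
  have h : 1 <= l ^+ 2 + (-1) ^+ 2 by rewrite sqrrN expr1n lerDr sqr_ge0.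
  by have := ler_wsqrtr h; rewrite sqrtr1.
by rewrite sqrtr_gt0 sqrrN expr1n ltr_pwDr ?sqr_ge0.
Qed.

Lemma inv_lpi (l : R) : nc ((rC l + iC R)^-1) <= 1.
Proof.
have -> : rC l + iC R = Complex l 1 by rewrite /rC /iC; simpc.
rewrite ncV /= invf_le1.
  have h : 1 <= l ^+ 2 + 1 ^+ 2 by rewrite expr1n lerDr sqr_ge0.
  by have := ler_wsqrtr h; rewrite sqrtr1.
by rewrite sqrtr_gt0 expr1n ltr_pwDr ?sqr_ge0.
Qed.

Lemma zconj (z : C) : z * conjc z = rC (nc z ^+ 2).
Proof.
case: z => a b; rewrite /rC /= sqr_sqrtr ?addr_ge0 ?sqr_ge0 //.
simpc; apply/eqP; rewrite eq_complex /=; apply/andP; split; apply/eqP; ring.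
Qed.

Lemma nc_nat n : nc (n%:R : C) = n%:R.
Proof.
have -> : (n%:R : C) = rC (n%:R) by rewrite -(rmorph_nat (real_complex R)).
by rewrite nc_rC ger0_norm.
Qed.


Lemma realq1 (a b : R) : 0 <= a -> 0 < b ->
  (4 * a ^+ 2 + 4 * b ^+ 2)^-1 * (4 * a) <= (2 * b)^-1.
Proof.
move=> a0 b0; have D0 : 0 < 4 * a ^+ 2 + 4 * b ^+ 2 by nra.
rewrite mulrC ler_pdivrMr // [_^-1 * _]mulrC ler_pdivlMr; have := sqr_ge0 (a - b); nra.
Qed.

Lemma realq2 (a b : R) : 0 <= a -> 0 < b ->
  (4 * a ^+ 2 + 4 * b ^+ 2)^-1 * (4 * b) <= b^-1.
Proof.
move=> a0 b0; have D0 : 0 < 4 * a ^+ 2 + 4 * b ^+ 2 by nra.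
rewrite mulrC ler_pdivrMr // [_^-1 * _]mulrC ler_pdivlMr; have := sqr_ge0 (a - b); nra.
Qed.

Lemma Dval (c : C) x t : let z := 1 - wfun c x t in
  4 * ((1 - wfun c x t) * conjc (1 - wfun c x t)) + Ncst c ^+ 2
  = rC (4 * nc z ^+ 2 + 4 * (nc c ^+ 2) ^+ 2).
Proof.
move=> z; rewrite -/z /Ncst !zconj.
rewrite -[rC (4 * _ + _)]/(real_complex R _).
rewrite /rC !complexr0 rmorphD !rmorphM !rmorph_nat; ring.
Qed.


Lemma ncc_pos (c : C) : c != 0 -> 0 < nc c ^+ 2.
Proof.
move=> hc; rewrite exprn_gt0 // lt_def nc_ge0 andbT.
by apply/eqP => /(@ComplexField.Normc.eq0_normc R) h; rewrite h eqxx in hc.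
Qed.

Lemma Ycoef1 (c : C) x t : c != 0 ->
  nc ((4 * ((1 - wfun c x t) * conjc (1 - wfun c x t)) + Ncst c ^+ 2)^-1
      * (4 * (1 - conjc (wfun c x t)))) <= (2 * nc c ^+ 2)^-1.
Proof.
move=> hc; rewrite Dval ncM ncV nc_rC ger0_norm; last by rewrite addr_ge0 // mulr_ge0 // sqr_ge0.
have -> : 1 - conjc (wfun c x t) = conjc (1 - wfun c x t) by rewrite rmorphB rmorph1.
rewrite ncM nc_nat nc_conj; apply: realq1; [exact: nc_ge0 | exact: ncc_pos].
Qed.

Lemma Ycoef2 (c : C) x t : c != 0 ->
  nc ((4 * ((1 - wfun c x t) * conjc (1 - wfun c x t)) + Ncst c ^+ 2)^-1
      * (2 * iC R * Ncst c)) <= (nc c ^+ 2)^-1.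
Proof.
move=> hc; rewrite Dval ncM ncV nc_rC ger0_norm; last by rewrite addr_ge0 // mulr_ge0 // sqr_ge0.
rewrite /Ncst zconj !ncM nc_nat nc_iC nc_rC ger0_norm ?sqr_ge0 //.
have -> : 2 * 1 * (2 * nc c ^+ 2) = 4 * nc c ^+ 2 by ring.
apply: realq2; [exact: nc_ge0 | exact: ncc_pos].
Qed.

End Sc.

Section Mx.
Variable R : realType.
Local Notation C := R[i].
Local Notation nc := (@ComplexField.Normc.normc R).

Lemma mb_ge0 m n (A : 'M[C]_(m.+1, n.+1)) K : mb A K -> 0 <= K.
Proof. by move=> hA; exact: le_trans (nc_ge0 _) (hA ord0 ord0). Qed.

Lemma mb_scale_le m n (A : 'M[C]_(m.+1, n.+1)) k kap Ka :
  nc k <= kap -> mb A Ka -> mb (k *: A) (kap * Ka).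
Proof.
move=> hk hA; have Ka0 := mb_ge0 hA.
by apply: mb_mono (mb_scale k hA) _; rewrite ler_wpM2r.
Qed.

Lemma mb_svec (c : C) : mb (svec c) (nc c).
Proof. by move=> i j; rewrite mxE; case: ifP => _; rewrite ?ncN. Qed.

Lemma mb_sigma2 : mb (sigma2 R) 1.
Proof. by apply: mb_mx22; rewrite ?nc0 ?ncN ?nc_iC. Qed.

Lemma Ybound (c : C) : c != 0 -> exists K, forall x t, mb (Ymat c x t) K.
Proof.
move=> hc.
have hs := mb_svec c.
have M1 := mb_mul (mb_mul hs (mb_tr hs)) mb_sigma2.
have M2 := mb_mul (mb_mul (mb_mul mb_sigma2 (mb_conj hs)) (mb_tr hs)) mb_sigma2.
eexists => x t; rewrite /Ymat; cbv zeta.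
rewrite scalerDr !scalerA; apply: mb_add.
  exact: mb_scale_le (Ycoef1 x t hc) M1.
exact: mb_scale_le (Ycoef2 x t hc) M2.
Qed.

Lemma Gbound (c : C) : c != 0 -> exists K, forall l x t, mb (Gmat c l x t) K.
Proof.
move=> /Ybound [KY hY].
eexists => l x t; rewrite /Gmat.
apply: mb_add; first apply: mb_add.
- exact: mb_1.
- exact: mb_scale_le (inv_lmi l) (hY x t).
- apply: mb_scale_le (inv_lpi l) _.
  exact: mb_mul (mb_mul mb_sigma2 (mb_conj (hY x t))) mb_sigma2.
Qed.

Lemma Ebound (l : R) : mb (Emat l) (1 * 1).
Proof.
rewrite /Emat; apply: mb_scale_le.
  by rewrite nc_rC ger0_norm; have /andP[] := nfac_bound l.
apply: mb_mx22; rewrite ?nc1 // ncM nc_iC nc_rC mul1r; exact: lrho_bound.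
Qed.

Lemma Expbound (l x t : R) : mb (Expmat l x t) 1.
Proof. by apply: mb_mx22; rewrite ?nc_expi ?nc0. Qed.

Lemma Ubound (c : C) : c != 0 -> exists K, forall l x t, mb (U0 c l x t) K.
Proof.
move=> /Gbound [KG hG].
eexists => l x t; rewrite /U0.
exact: mb_mul (mb_mul (hG l x t) (Ebound l)) (Expbound l x t).
Qed.

Lemma munu_bound (c : C) : c != 0 -> exists K, forall l x t,
  nc (mu22 c l x t) <= K /\ nc (nu22 c l x t) <= K.
Proof.
move=> /Ubound [K hU].
have K0 : 0 <= K := mb_ge0 (hU 0 0 0).
have h1 l x t : nc (u1 c l x t) <= K by exact: hU.
have h2 l x t : nc (u2 c l x t) <= K by exact: hU.
have sq (u : C) : nc u <= K -> nc (u ^+ 2) <= K * K.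
  by move=> hu; rewrite expr2 ncM; apply: ler_pM; rewrite ?nc_ge0.
exists (K * K + K * K) => l x t.
have a1 := sq _ (h1 l x t).
have h2' : nc (conjc (u2 c l x t)) <= K by rewrite nc_conj.
have a2 := sq _ h2'.
split.
  rewrite /mu22; apply: le_trans (ncD _ _) _; rewrite ncN; exact: lerD a1 a2.
rewrite /nu22; apply: le_trans (ncD _ _) _; rewrite !(ncM (iC R)) nc_iC !mul1r; exact: lerD a1 a2.
Qed.

End Mx.

Unset Implicit Arguments. Set Strict Implicit.
Local Close Scope classical_set_scope.
Theorem mainTheorem14 (R : realType) (c : R[i]) (psi1 : R -> R[i]) :
  c != 0 ->
  {ae (@lebesgue_measure R), forall l : R,
      Cintegrable (fun y => psi1 y * conjc (nu22 c l y 0)) /\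
      Cintegrable (fun y => psi1 y * conjc (mu22 c l y 0))} ->
  (@lebesgue_measure R).-integrable setT (fun l => (Cmu psi1 c l)%:E) ->
  (@lebesgue_measure R).-integrable setT (fun l => (Cnu psi1 c l)%:E) ->
  exists M : R, forall x t : R, ComplexField.Normc.normc (psi1R psi1 c x t) <= M.
Proof.
move=> hc _ hmu hnu.
have [K hK] := munu_bound hc.
pose g l := K * `|Cmu psi1 c l| + K * `|Cnu psi1 c l|.
have ig : (@lebesgue_measure R).-integrable setT (fun l => (g l)%:E).
  have i1 := integrableZl measurableT K (integrable_norm hmu).
  have i2 := integrableZl measurableT K (integrable_norm hnu).
  apply: (eq_integrable measurableT _ _ _ (integrableD measurableT i1 i2)) => l _ /=.
  by rewrite /g EFinD !EFinM.
exists (2 * Rintegral (@lebesgue_measure R) setT g) => x t.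
pose f l := rC (Cmu psi1 c l) * mu22 c l x t + rC (Cnu psi1 c l) * nu22 c l x t.
have hf l : ComplexField.Normc.normc (f l) <= g l.
  have [h1 h2] := hK l x t.
  apply: le_trans (ncD _ _) _; rewrite !ncM !nc_rC /g.
  apply: lerD; rewrite mulrC; apply: ler_wpM2r => //; exact: normr_ge0.
have hre : forall l, `|complex.Re (f l)| <= g l.
  by move=> l; apply: le_trans (Re_nc _) (hf l).
have him : forall l, `|complex.Im (f l)| <= g l.
  by move=> l; apply: le_trans (Im_nc _) (hf l).
have b1 := @Rint_bound R _ _ hre ig.
have b2 := @Rint_bound R _ _ him ig.
rewrite /psi1R -/f /Cint.
apply: le_trans (nc_le_sum _) _; rewrite /=.
lra.
Qed.
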